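(* For every prime power $k$, the graph $G_k$ has girth at least $6$.
   Context: A Latin square of order $k$ is a partition $L = L(1) \cup \dots \cup L(k)$ of $A = [k]\times[k]$ such that each row $A[i,\cdot] = \{(i,j) : j \in [k]\}$ and each column $\{(j,i): j\in[k]\}$ meets each part $L(n)$ in exactly one position. Two Latin squares $L_1, L_2$ of order $k$ are orthogonal if $|L_1(n_1)\cap L_2(n_2)| = 1$ for all $n_1, n_2 \in [k]$. For a prime power $k$, fix $k-1$ mutually orthogonal Latin squares $L_1,\dots,L_{k-1}$ of order $k$. Let $R = \{A[i,\cdot] : i \in [k]\}$ (the rows) and $\mathcal{L} = \{L_s(n) : s \in [k-1], n \in [k]\}$. The graph $G_k$ has vertex set $A \cup R \cup \mathcal{L}$ (disjoint union, $2k^2$ vertices) and an edge between $p \in A$ and $S \in R \cup \mathcal{L}$ whenever $p \in S$; no other edges. The girth is the length of a shortest cycle. *)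

(* Defs.v *)
From mathcomp Require Import all_boot.
Set Implicit Arguments. Unset Strict Implicit. Unset Printing Implicit Defensive.

(* Positions A = [k] x [k] are pairs of ordinals.  A Latin square
   L = L(1) u ... u L(k) (a partition of A into k labelled parts) is
   represented by its labelling function f : A -> [k], with L(n) = f^-1(n). *)
Definition cell (k : nat) := ('I_k * 'I_k)%type.

Definition is_latin_square (k : nat) (f : cell k -> 'I_k) : Prop :=
  (forall (i n : 'I_k), #|[set j : 'I_k | f (i, j) == n]| = 1) /\
  (forall (i n : 'I_k), #|[set j : 'I_k | f (j, i) == n]| = 1).

Definition orthogonal (k : nat) (f g : cell k -> 'I_k) : Prop :=
  forall (n1 n2 : 'I_k), #|[set p : cell k | (f p == n1) && (g p == n2)]| = 1.

Definition MOLS (k : nat) (L : 'I_(k - 1) -> cell k -> 'I_k) : Prop :=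
  (forall s, is_latin_square (L s)) /\
  (forall s t, s != t -> orthogonal (L s) (L t)).

(* Vertices of G_k: A  +  (R  +  Lcal), where the row A[i,.] is indexed by i
   and the part L_s(n) is indexed by (s, n). *)
Definition Gk_vertex (k : nat) : finType :=
  (cell k + ('I_k + ('I_(k - 1) * 'I_k)))%type.

Definition Gk_incident (k : nat) (L : 'I_(k - 1) -> cell k -> 'I_k)
  (p : cell k) (S : 'I_k + ('I_(k - 1) * 'I_k)) : bool :=
  match S with
  | inl i => p.1 == i
  | inr (s, n) => L s p == n
  end.

Definition Gk_adj (k : nat) (L : 'I_(k - 1) -> cell k -> 'I_k) : rel (Gk_vertex k) :=
  fun u v =>
    match u, v with
    | inl p, inr X => Gk_incident L p X
    | inr X, inl p => Gk_incident L p X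
    | _, _ => false
    end.

(* A cycle of length m >= 3 is a duplicate-free sequence v_0 ... v_(m-1) with
   v_i ~ v_(i+1) (indices mod m).  Girth >= g : every cycle has length >= g
   (vacuous if the graph is acyclic, i.e. girth = infinity). *)
Definition girth_at_least (T : finType) (e : rel T) (g : nat) : Prop :=
  forall c : seq T, uniq c -> cycle e c -> 2 < size c -> g <= size c.

Definition prime_power (k : nat) : Prop :=
  exists p e : nat, prime p /\ 0 < e /\ k = p ^ e.

(* Main.v *)
Require Import Defs.
From mathcomp Require Import all_boot.

Lemma card1_eq (T : finType) (A : {set T}) x y :
  #|A| = 1 -> x \in A -> y \in A -> x = y.
Proof.
move=> /eqP /cards1P [z ->]; rewrite !inE => /eqP -> /eqP -> //.
Qed.

Lemma key k (L : 'I_(k - 1) -> cell k -> 'I_k) p q X Y :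
  MOLS L -> X != Y ->
  Gk_incident L p X -> Gk_incident L q X ->
  Gk_incident L p Y -> Gk_incident L q Y -> p = q.
Proof.
case=> [HL HO].
have rowcase : forall i s n, Gk_incident L p (inl i) -> Gk_incident L q (inl i) ->
   Gk_incident L p (inr (s, n)) -> Gk_incident L q (inr (s, n)) -> p = q.
  move=> i s n; case: p => [p1 p2]; case: q => [q1 q2] /= /eqP E1 /eqP E2 Hp Hq.
  subst p1 q1.
  have [H1 _] := HL s.
  have := @card1_eq _ _ p2 q2 (H1 i n).
  by rewrite !inE Hp Hq => /(_ isT isT) ->.
case: X => [i|[s n]]; case: Y => [j|[t m]] /= NE.
- move=> /eqP E1 /eqP E2 /eqP E3 /eqP E4; move: NE; by rewrite -E1 -E3 eqxx.
- by move=> H1 H2 H3 H4; apply: (rowcase i t m).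
- by move=> H1 H2 H3 H4; apply: (rowcase j s n).
- move=> H1 H2 H3 H4.
  have [st|st] := eqVneq s t.
    subst t; move: NE; move/eqP: H1 => <-; move/eqP: H3 => <-; by rewrite eqxx.
  have := @card1_eq _ _ p q (HO s t st n m).
  by rewrite !inE H1 H2 H3 H4 => /(_ isT isT).
Qed.

Theorem lemma2 (k : nat) (L : 'I_(k - 1) -> cell k -> 'I_k) :
  prime_power k -> MOLS L -> girth_at_least (Gk_adj L) 6.
Proof.
move=> _ HM c.
case: c => [|a [|b [|c [|d [|e [|f r]]]]]] //=.
- by case: a => ?; case: b => ?; case: c => ? /=; rewrite ?andbF.
- move=> U.
  case: a U => [p|X]; case: b => [X'|p']; case: c => [q|Y]; case: d => [Y'|q'] //=;
    rewrite ?andbF //= ?inE => U /and5P [H1 H2 H3 H4 _] _.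
  + have E : p = q.
      apply: (@key _ L _ _ p' q' HM) => //.
      by apply/negP => /eqP E; subst; move: U; rewrite !eqxx /= ?andbF.
    by subst; move: U; rewrite !eqxx /=.
  + have E : X' = Y'.
      apply: (@key _ L _ _ X Y HM) => //.
      by apply/negP => /eqP E; subst; move: U; rewrite !eqxx /= ?andbF.
    by subst; move: U; rewrite !eqxx /= ?andbF.
- by case: a => ?; case: b => ?; case: c => ?; case: d => ?; case: e => ? /=; rewrite ?andbF.
Qed.
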